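(* Let $H:[0,T]\times\mathbb{R}^N\times\mathbb{R}^N\to\mathbb{R}$, and suppose there are functions $f:[0,T]\times\mathbb{R}^N\times\mathbb{B}\to\mathbb{R}^N$, $l:[0,T]\times\mathbb{R}^N\times\mathbb{B}\to\mathbb{R}$, with $\mathbb{B}$ the closed unit ball of $\mathbb{R}^{N+1}$, such that $H(t,x,p)=\sup_{a\in\mathbb{B}}\{\langle p,f(t,x,a)\rangle-l(t,x,a)\}$ for all $t,x,p$ and (R1) $f$ and $l$ are continuous; (R2) for every $R\geq0$ there is an integrable $K_R:[0,T]\to[0,\infty)$ with $|f(t,x,a)-f(t,y,a)|+|l(t,x,a)-l(t,y,a)|\leq K_R(t)|x-y|$ for all $x,y\in\mathbb{B}_R$, $a\in\mathbb{B}$ and a.e. $t$; (R3) there is an integrable $C:[0,T]\to[0,\infty)$ with $|f(t,x,a)|+|l(t,x,a)|\leq C(t)(1+|x|)$ for all $x$, $a\in\mathbb{B}$ and a.e. $t$. Then $H$ satisfies condition (A) (see context).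
   Context: $\mathbb{B}_R$ is the closed ball of radius $R$ centered at $0$; $\|W\|:=\sup_{\xi\in W}|\xi|$; $H^*(t,x,v)=\sup_p\{\langle v,p\rangle-H(t,x,p)\}$ and $\mathrm{dom}\,H^*(t,x,\cdot)=\{v:H^*(t,x,v)\neq\pm\infty\}$. Conditions: (H1) $H$ continuous in all variables. (H2) $H(t,x,\cdot)$ convex. (H3) for every $R\geq0$ there is $C_R\geq0$ with $|H(t,x,p)-H(t,x,q)|\leq C_R|p-q|$ for $t\in[0,T]$, $x\in\mathbb{B}_R$, all $p,q$. (H4) there is an integrable $c\geq0$ with $|H(t,x,p)-H(t,x,q)|\leq c(t)(1+|x|)|p-q|$ for a.e. $t$, all $x,p,q$. (H5) for every $R\geq0$ there is an integrable $k_R\geq0$ with $|H(t,x,p)-H(t,y,p)|\leq k_R(t)(1+|p|)|x-y|$ for $x,y\in\mathbb{B}_R$, all $p$, a.e. $t$. Condition (A): $H$ satisfies (H1)–(H5) and there is a continuous $\lambda:[0,T]\times\mathbb{R}^N\to[0,\infty)$ with $\|\mathrm{dom}\,H^*(t,x,\cdot)\|\leq\lambda(t,x)$ and $\|H^*(t,x,\mathrm{dom}\,H^*(t,x,\cdot))\|\leq\lambda(t,x)$ for all $t,x$; for every $R\geq0$ there is an integrable $\zeta_R\geq0$ such that $\lambda(t,\cdot)$ is $\zeta_R(t)$-Lipschitz on $\mathbb{B}_R$ for a.e. $t$; and there is an integrable $\vartheta\geq0$ with $\lambda(t,x)\leq\vartheta(t)(1+|x|)$ for all $x$ and a.e. $t$.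 *)

(* Defs.v *)
From HB Require Import structures.
From mathcomp Require Import all_boot all_order all_algebra.
From mathcomp Require Import all_classical all_reals all_analysis.
Set Implicit Arguments. Unset Strict Implicit. Unset Printing Implicit Defensive.
Import Order.TTheory GRing.Theory Num.Theory.
Import numFieldNormedType.Exports.
Local Open Scope classical_set_scope.
Local Open Scope ring_scope.

(* R^n is represented by row vectors 'rV[R]_n *)
Definition dotv {R : realType} {n : nat} (u v : 'rV[R]_n) : R :=
  \sum_(i < n) u 0 i * v 0 i.

Definition enorm {R : realType} {n : nat} (u : 'rV[R]_n) : R :=
  Num.sqrt (dotv u u).

Definition cball {R : realType} (n : nat) (r : R) : set 'rV[R]_n :=
  [set x | enorm x <= r].

Arguments cball {R} n r _.

Definition tint {R : realType} (T : R) : set R := [set t | 0 <= t <= T].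

Definition lebR {R : realType} := (@lebesgue_measure R).

Definition integ_nonneg {R : realType} (T : R) (c : R -> R) : Prop :=
  (forall t, tint T t -> 0 <= c t) /\
  lebR.-integrable (tint T) (EFin \o c).

Definition Hstar {R : realType} {N : nat}
  (H : R -> 'rV[R]_N -> 'rV[R]_N -> R) (t : R) (x v : 'rV[R]_N) : \bar R :=
  ereal_sup [set ((dotv v p - H t x p)%:E) | p in [set: 'rV[R]_N]].

Definition domHstar {R : realType} {N : nat}
  (H : R -> 'rV[R]_N -> 'rV[R]_N -> R) (t : R) (x : 'rV[R]_N) : set 'rV[R]_N :=
  [set v | Hstar H t x v \is a fin_num].

Section Conds.
Context {R : realType} {N : nat} (T : R) (H : R -> 'rV[R]_N -> 'rV[R]_N -> R).

Definition H1 : Prop :=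
  {within [set z : R * 'rV[R]_N * 'rV[R]_N | tint T z.1.1],
    continuous (fun z : R * 'rV[R]_N * 'rV[R]_N => H z.1.1 z.1.2 z.2)}.

Definition H2 : Prop :=
  forall t x, tint T t -> forall (p q : 'rV[R]_N) (s : R), 0 <= s <= 1 ->
    H t x (s *: p + (1 - s) *: q) <= s * H t x p + (1 - s) * H t x q.

Definition H3 : Prop :=
  forall r : R, 0 <= r -> exists C : R, 0 <= C /\
    forall t x p q, tint T t -> cball N r x ->
      `|H t x p - H t x q| <= C * enorm (p - q).

Definition H4 : Prop :=
  exists c : R -> R, integ_nonneg T c /\
    {ae lebR, forall t, tint T t -> forall x p q,
      `|H t x p - H t x q| <= c t * (1 + enorm x) * enorm (p - q)}.

Definition H5 : Prop :=
  forall r : R, 0 <= r -> exists k : R -> R, integ_nonneg T k /\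
    {ae lebR, forall t, tint T t -> forall x y p, cball N r x -> cball N r y ->
      `|H t x p - H t y p| <= k t * (1 + enorm p) * enorm (x - y)}.

Definition condA : Prop :=
  H1 /\ H2 /\ H3 /\ H4 /\ H5 /\
  exists lam : R -> 'rV[R]_N -> R,
    {within [set z : R * 'rV[R]_N | tint T z.1],
      continuous (fun z : R * 'rV[R]_N => lam z.1 z.2)} /\
    (forall t x, tint T t -> 0 <= lam t x) /\
    (forall t x, tint T t -> forall v, domHstar H t x v -> enorm v <= lam t x) /\
    (forall t x, tint T t -> forall v, domHstar H t x v ->
       (`|Hstar H t x v| <= (lam t x)%:E)%E) /\
    (forall r : R, 0 <= r -> exists zeta : R -> R, integ_nonneg T zeta /\
       {ae lebR, forall t, tint T t -> forall x y, cball N r x -> cball N r y ->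
          `|lam t x - lam t y| <= zeta t * enorm (x - y)}) /\
    (exists theta : R -> R, integ_nonneg T theta /\
       {ae lebR, forall t, tint T t -> forall x, lam t x <= theta t * (1 + enorm x)}).

End Conds.

(* Main.v *)
Require Import Defs.
From HB Require Import structures.
From mathcomp Require Import all_boot all_order all_algebra.
From mathcomp Require Import all_classical all_reals all_analysis.
From mathcomp Require Import ring lra.
Import Order.TTheory GRing.Theory Num.Theory.
Import numFieldNormedType.Exports.
Local Open Scope classical_set_scope.
Local Open Scope ring_scope.

Lemma supA_ub {R : realType} {Y : Type} (A : set Y) (g : Y -> R) (M : R) a :
  (forall b, A b -> g b <= M) -> A a -> g a <= sup [set g b | b in A].
Proof.
move=> hM Aa; apply: sup_upper_bound; last by exists a.
split; first by exists (g a), a.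
by exists M => _ [b Ab <-]; exact: hM.
Qed.

Lemma supA_le {R : realType} {Y : Type} (A : set Y) (g : Y -> R) (M : R) :
  A !=set0 -> (forall b, A b -> g b <= M) -> sup [set g b | b in A] <= M.
Proof.
move=> [a Aa] hM; apply: ge_sup; first by exists (g a), a.
by move=> _ [b Ab <-]; exact: hM.
Qed.

Lemma supA_cmp {R : realType} {Y : Type} (A : set Y) (g h : Y -> R) (e M : R) :
  A !=set0 -> (forall b, A b -> h b <= M) -> (forall b, A b -> g b <= h b + e) ->
  sup [set g b | b in A] <= sup [set h b | b in A] + e.
Proof.
move=> A0 hM hgh; apply: supA_le => // b Ab.
by apply: le_trans (hgh _ Ab) _; rewrite lerD2r; exact: supA_ub hM Ab.
Qed.

Lemma supA_dist {R : realType} {Y : Type} (A : set Y) (g h : Y -> R) (e M : R) :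
  A !=set0 -> (forall b, A b -> `|g b| <= M) -> (forall b, A b -> `|h b| <= M) ->
  (forall b, A b -> `|g b - h b| <= e) ->
  `|sup [set g b | b in A] - sup [set h b | b in A]| <= e.
Proof.
move=> A0 hg hh hd.
have ub : forall k : Y -> R, (forall b, A b -> `|k b| <= M) -> forall b, A b -> k b <= M.
  by move=> k hk b Ab; exact: le_trans (ler_norm _) (hk _ Ab).
rewrite ler_norml; apply/andP; split.
  rewrite lerBrDr addrC lerBlDr.
  apply: (@supA_cmp R Y A h g e M A0 (ub _ hg)) => b Ab.
  have := hd _ Ab; rewrite ler_norml => /andP[+ _]; by rewrite lerBrDr addrC lerBlDr.
rewrite lerBlDr addrC; apply: (@supA_cmp R Y A g h e M A0 (ub _ hh)) => b Ab.
by have := hd _ Ab; rewrite ler_norml => /andP[_]; rewrite lerBlDr addrC.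
Qed.

Lemma cvg_sum_seq {R : realType} {T I : Type} (F : set_system T) {FF : Filter F}
  (r : seq I) (h : I -> T -> R) (l : I -> R) :
  (forall i, h i @ F --> l i) ->
  (fun z => \sum_(i <- r) h i z) @ F --> \sum_(i <- r) l i.
Proof.
move=> hl; elim: r => [|i r IH].
  rewrite big_nil; under eq_fun do rewrite big_nil; exact: cvg_cst.
rewrite big_cons; under eq_fun do rewrite big_cons.
exact: (cvgD (hl i) IH).
Qed.

Lemma cvg_dotv {R : realType} {T : Type} {F : set_system T} {FF : Filter F} {n}
  {u v : T -> 'rV[R]_n} {u0 v0} :
  u @ F --> u0 -> v @ F --> v0 ->
  (fun z => dotv (u z) (v z)) @ F --> dotv u0 v0.
Proof.
move=> hu hv; rewrite /dotv; apply: cvg_sum_seq => i.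
apply: cvgM.
  exact: (cvg_comp _ _ hu (@coord_continuous _ 1 n 0 i u0)).
exact: (cvg_comp _ _ hv (@coord_continuous _ 1 n 0 i v0)).
Qed.

Lemma cvg_within_map {X Z : topologicalType} (m : X -> Z) (D : set X) (E : set Z) x :
  m @ nbhs x --> m x -> (forall y, D y -> E (m y)) ->
  m @ within D (nbhs x) --> within E (nbhs (m x)).
Proof.
move=> mc DE U /= hU; have := mc _ hU; rewrite !nbhs_simpl /=; apply: filterS => y h Dy.
exact: h (DE _ Dy).
Qed.

Lemma tube {R : realType} {X Y : topologicalType} (S : set X) (A : set Y)
  (g : X * Y -> R) : compact A -> {within S `*` A, continuous g} ->
  forall z0, S z0 -> forall e : R, 0 < e ->
  \forall z \near within S (nbhs z0), forall a, A a -> `|g (z0, a) - g (z, a)| < e.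
Proof.
move=> cA gc z0 Sz0 e e0.
have := proj1 (compact_near_coveringP A) cA X (within S (nbhs z0))
  (fun z a => S z -> A a -> `|g (z0, a) - g (z, a)| < e) _.
move=> /(_ _) H.
have {}H : \forall z \near within S (nbhs z0), A `<=` (fun a => S z -> A a -> `|g (z0, a) - g (z, a)| < e).
  apply: H => a Aa.
  have /cvgrPdist_lt /(_ (e/2)) := (proj1 (subspace_continuousP _ _) gc (z0, a) (conj Sz0 Aa)).
  have e2 : 0 < e / 2 by rewrite divr_gt0.
  move=> /(_ e2) [[U V] [/= nU nV] UV].
  exists (V, U); first by split => //=; apply: filterS nU.
  move=> [a' z] [/= Va' Uz] Sz Aa'.
  have h1 := UV (z0, a') (conj (nbhs_singleton nU) Va') (conj Sz0 Aa').
  have h2 := UV (z, a') (conj Uz Va') (conj Sz Aa').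
  rewrite /= in h1 h2.
  rewrite (splitr e); apply: le_lt_trans (ler_distD (g (z0, a)) _ _) _.
  by rewrite distrC; apply: ltrD.
have WS : \forall z \near within S (nbhs z0), S z by apply: withinT.
move: WS; apply: filter_app; move: H; apply: filter_app.
apply: filterE; move=> z hz Sz b Ab; exact: (hz b Ab Sz Ab).
Qed.

Lemma bnd {R : realType} {X Y : topologicalType} (S : set X) (A : set Y)
  (g : X * Y -> R) : compact A -> {within S `*` A, continuous g} ->
  forall z, S z -> exists M : R, forall a, A a -> `|g (z, a)| <= M.
Proof.
move=> cA gc z Sz.
have cK : compact ([set z] `*` A) by apply: compact_setX => //; exact: compact_set1.
have gK : {within [set z] `*` A, continuous g}.
  by apply: continuous_subspaceW gc => w [/= -> Aw].
have := compact_bounded (continuous_compact gK cK).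
move=> [M [_ hM]].
exists (M + 1) => a Aa.
have M1 : M < M + 1 by rewrite ltrDl.
have /(_ (g (z, a))) := hM (M + 1) M1.
by apply; exists (z, a).
Qed.

Lemma sup_cont {R : realType} {X Y : topologicalType} (S : set X) (A : set Y)
  (g : X * Y -> R) (Phi : X -> R) : compact A -> A !=set0 ->
  {within S `*` A, continuous g} ->
  (forall z, S z -> Phi z = sup [set g (z, a) | a in A]) ->
  {within S, continuous Phi}.
Proof.
move=> cA A0 gc hPhi; apply/subspace_continuousP => z0 Sz0.
apply/cvgrPdist_lt => e e0.
have e2 : 0 < e / 2 by rewrite divr_gt0.
have T := @tube R X Y S A g cA gc z0 Sz0 _ e2.
have WS : \forall z \near within S (nbhs z0), S z by apply: withinT.
move: WS; apply: filter_app; move: T; apply: filter_app.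
apply: filterE; move=> z hz Sz.
rewrite /from_subspace (hPhi _ Sz0) (hPhi _ Sz).
have [M0 hM0] := @bnd R X Y S A g cA gc z0 Sz0.
have [M1 hM1] := @bnd R X Y S A g cA gc z Sz.
apply: le_lt_trans (_ : _ <= e / 2) _; last by rewrite ltr_pdivrMr // ltr_pMr // ltr1n.
apply: (@supA_dist R Y A (fun a => g (z0, a)) (fun a => g (z, a)) (e / 2) (Num.max M0 M1) A0).
- by move=> b Ab; rewrite le_max (hM0 _ Ab).
- by move=> b Ab; rewrite le_max (hM1 _ Ab) orbT.
- by move=> b Ab; apply: ltW; exact: (hz b Ab).
Qed.

Lemma dotvBl {R : realType} {n} (p q w : 'rV[R]_n) :
  dotv (p - q) w = dotv p w - dotv q w.
Proof.
rewrite /dotv -sumrB; apply: eq_bigr => i _; rewrite !mxE; ring.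
Qed.

Lemma dotvBr {R : realType} {n} (p q w : 'rV[R]_n) :
  dotv w (p - q) = dotv w p - dotv w q.
Proof.
rewrite /dotv -sumrB; apply: eq_bigr => i _; rewrite !mxE; ring.
Qed.

Lemma dotv_conv {R : realType} {n} (p q w : 'rV[R]_n) (s : R) :
  dotv (s *: p + (1 - s) *: q) w = s * dotv p w + (1 - s) * dotv q w.
Proof.
rewrite /dotv !mulr_sumr -big_split /=; apply: eq_bigr => i _; rewrite !mxE /=; ring.
Qed.

Lemma dotvZr {R : realType} {n} (v w : 'rV[R]_n) (s : R) :
  dotv v (s *: w) = s * dotv v w.
Proof.
rewrite /dotv !mulr_sumr; apply: eq_bigr => i _; rewrite !mxE; ring.
Qed.

Lemma dotvv_ge0 {R : realType} {n} (v : 'rV[R]_n) : 0 <= dotv v v.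
Proof. by rewrite /dotv; apply: sumr_ge0 => i _; rewrite -expr2 sqr_ge0. Qed.

Lemma dotvv {R : realType} {n} (v : 'rV[R]_n) : dotv v v = enorm v ^+ 2.
Proof. by rewrite /enorm sqr_sqrtr // dotvv_ge0. Qed.

Lemma enorm_ge0 {R : realType} {n} (v : 'rV[R]_n) : 0 <= enorm v.
Proof. exact: sqrtr_ge0. Qed.

Lemma enorm0 {R : realType} {n} : enorm (0 : 'rV[R]_n) = 0.
Proof.
rewrite /enorm /dotv big1 ?sqrtr0 // => i _; by rewrite mxE mul0r.
Qed.

Lemma coord_le_enorm {R : realType} {n} (v : 'rV[R]_n) i : `|v 0 i| <= enorm v.
Proof.
rewrite /enorm -(sqrtr_sqr (v 0 i)) ler_sqrt ?dotvv_ge0 //.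
rewrite /dotv (bigD1 i) //= -expr2 lerDl; apply: sumr_ge0 => j _.
by rewrite -expr2 sqr_ge0.
Qed.

Lemma coord_le_mx {R : realType} {n} (v : 'rV[R]_n) i : `|v 0 i| <= `|v|.
Proof.
rewrite [leRHS]/Num.Def.normr /= mx_normrE; apply/bigmax_geP; right => /=.
by exists (0, i).
Qed.

Lemma mx_le_enorm {R : realType} {n} (v : 'rV[R]_n) : `|v| <= enorm v.
Proof.
rewrite [leLHS]/Num.Def.normr /= mx_normrE; apply/bigmax_leP; split => /=.
  exact: enorm_ge0.
by move=> [i j] _ /=; rewrite ord1; exact: coord_le_enorm.
Qed.

Lemma dotv_bound {R : realType} {n} (u v : 'rV[R]_n) :
  `|dotv u v| <= n%:R * `|u| * `|v|.
Proof.
rewrite /dotv; apply: le_trans (ler_norm_sum _ _ _) _.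
have -> : n%:R * `|u| * `|v| = \sum_(i < n) (`|u| * `|v|).
  by rewrite sumr_const card_ord mulr_natl -mulrnAl.
apply: ler_sum => i _; rewrite normrM.
by apply: ler_pM => //; exact: coord_le_mx.
Qed.

Lemma cvg_enorm {R : realType} {T : Type} (F : set_system T) {FF : Filter F} {n}
  (u : T -> 'rV[R]_n) u0 : u @ F --> u0 -> (fun z => enorm (u z)) @ F --> enorm u0.
Proof.
move=> hu; rewrite /enorm.
exact: (cvg_comp _ _ (cvg_dotv hu hu) (@sqrt_continuous R (dotv u0 u0))).
Qed.

Lemma dotvZl {R : realType} {n} (v w : 'rV[R]_n) (s : R) :
  dotv (s *: v) w = s * dotv v w.
Proof.
rewrite /dotv !mulr_sumr; apply: eq_bigr => i _; rewrite !mxE; ring.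
Qed.

Lemma dotv0l {R : realType} {n} (w : 'rV[R]_n) : dotv 0 w = 0.
Proof. by rewrite /dotv big1 // => i _; rewrite mxE mul0r. Qed.

Lemma dotv0r {R : realType} {n} (w : 'rV[R]_n) : dotv w 0 = 0.
Proof. by rewrite /dotv big1 // => i _; rewrite mxE mulr0. Qed.

Lemma cbound {R : realType} {X : topologicalType} (K : set X) (h : X -> R) :
  compact K -> {within K, continuous h} -> exists M : R, forall z, K z -> `|h z| <= M.
Proof.
move=> cK hc.
have := compact_bounded (continuous_compact hc cK).
move=> [M [_ hM]].
exists (M + 1) => z Kz.
have M1 : M < M + 1 by rewrite ltrDl.
have /(_ (h z)) := hM (M + 1) M1.
by apply; exists z.
Qed.

Theorem theorem3p2 (R : realType) (N : nat) (T : R)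
  (H : R -> 'rV[R]_N -> 'rV[R]_N -> R)
  (f : R -> 'rV[R]_N -> 'rV[R]_N.+1 -> 'rV[R]_N)
  (l : R -> 'rV[R]_N -> 'rV[R]_N.+1 -> R) :
  (* H(t,x,p) = sup_{a in B} { <p, f(t,x,a)> - l(t,x,a) } *)
  (forall t x p, tint T t ->
     H t x p = sup [set dotv p (f t x a) - l t x a | a in cball N.+1 1]) ->
  (* (R1) *)
  {within [set z : R * 'rV[R]_N * 'rV[R]_N.+1 | tint T z.1.1 /\ cball N.+1 1 z.2],
    continuous (fun z : R * 'rV[R]_N * 'rV[R]_N.+1 => f z.1.1 z.1.2 z.2)} ->
  {within [set z : R * 'rV[R]_N * 'rV[R]_N.+1 | tint T z.1.1 /\ cball N.+1 1 z.2],
    continuous (fun z : R * 'rV[R]_N * 'rV[R]_N.+1 => l z.1.1 z.1.2 z.2)} ->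
  (* (R2) *)
  (forall r : R, 0 <= r -> exists K : R -> R, integ_nonneg T K /\
     {ae lebR, forall t, tint T t -> forall x y a,
        cball N r x -> cball N r y -> cball N.+1 1 a ->
        enorm (f t x a - f t y a) + `|l t x a - l t y a| <= K t * enorm (x - y)}) ->
  (* (R3) *)
  (exists C : R -> R, integ_nonneg T C /\
     {ae lebR, forall t, tint T t -> forall x a, cball N.+1 1 a ->
        enorm (f t x a) + `|l t x a| <= C t * (1 + enorm x)}) ->
  condA T H.
Proof.
move=> hH fc lc R2 R3.
pose A := @cball R N.+1 1.
have A0 : A !=set0 by exists 0; rewrite /A /cball /= enorm0 ler01.
have cA : compact A.
  apply: bounded_closed_compact.
    exists 1; split; first by rewrite num_real.
    move=> M M1 v Av /=.
    have Av1 : enorm v <= 1 := Av.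
    exact: le_trans (mx_le_enorm v) (le_trans Av1 (ltW M1)).
  have -> : A = (fun v => enorm v) @^-1` [set x : R | x <= 1] by [].
  apply: preimage_closed; last exact: closed_le.
  by move=> v _; exact: (@cvg_enorm R _ (nbhs v) _ _ id v cvg_id).
pose S1 := [set z : R * 'rV[R]_N * 'rV[R]_N | tint T z.1.1].
pose S2 := [set z : R * 'rV[R]_N | tint T z.1].
pose gH := fun w : R * 'rV[R]_N * 'rV[R]_N * 'rV[R]_N.+1 =>
  dotv w.1.2 (f w.1.1.1 w.1.1.2 w.2) - l w.1.1.1 w.1.1.2 w.2.
pose gL := fun w : R * 'rV[R]_N * 'rV[R]_N.+1 =>
  N%:R * `|f w.1.1 w.1.2 w.2| + `|l w.1.1 w.1.2 w.2|.
pose lam := fun t x => sup [set gL ((t, x), a) | a in A].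
have hf := proj1 (subspace_continuousP _ _) fc.
have hl := proj1 (subspace_continuousP _ _) lc.
have gLc : {within S2 `*` A, continuous gL}.
  apply/subspace_continuousP => w Sw.
  apply: cvgD; last exact: cvg_norm (hl w Sw).
  by apply: cvgMl_tmp; exact: cvg_norm (hf w Sw).
have gHc : {within S1 `*` A, continuous gH}.
  apply/subspace_continuousP => w [Sw Aw].
  pose m := fun w : R * 'rV[R]_N * 'rV[R]_N * 'rV[R]_N.+1 => (w.1.1.1, w.1.1.2, w.2).
  have mc : m @ nbhs w --> m w.
    rewrite /m /=; apply: (@cvg_pair _ _ _ (nbhs w) (nbhs (w.1.1.1, w.1.1.2)) (nbhs w.2)); first apply: (@cvg_pair _ _ _ (nbhs w) (nbhs w.1.1.1) (nbhs w.1.1.2)).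
    - exact: (cvg_comp _ _ (cvg_comp _ _ cvg_fst cvg_fst) cvg_fst).
    - exact: (cvg_comp _ _ (cvg_comp _ _ cvg_fst cvg_fst) cvg_snd).
    - exact: cvg_snd.
  have mW := @cvg_within_map _ _ m (S1 `*` A) (S2 `*` A) w mc (fun y Sy => Sy).
  have hf' := cvg_comp _ _ mW (hf (m w) (conj Sw Aw)).
  have hl' := cvg_comp _ _ mW (hl (m w) (conj Sw Aw)).
  have hp : (fun y : R * 'rV[R]_N * 'rV[R]_N * 'rV[R]_N.+1 => y.1.2) @ within (S1 `*` A) (nbhs w) --> w.1.2.
    have c1 := @cvg_within _ (nbhs w) _ (S1 `*` A). have c2 : (fun y : R * 'rV[R]_N * 'rV[R]_N * 'rV[R]_N.+1 => y.1.2) @ nbhs w --> w.1.2 by apply: (cvg_comp _ _ cvg_fst); exact: cvg_snd. by move=> P /c2 /c1.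
  exact: (cvgB (cvg_dotv hp hf') hl').
have H1c : H1 T H.
  apply: (@sup_cont R _ _ S1 A gH) => // z Sz; exact: hH.
have lamc : {within S2, continuous (fun z : R * 'rV[R]_N => lam z.1 z.2)}.
  by apply: (@sup_cont R _ _ S2 A gL).
have gL_ge0 : forall w, 0 <= gL w by move=> w; rewrite /gL addr_ge0 // mulr_ge0.
have gLb : forall t x, tint T t -> exists M, forall a, A a -> gL ((t,x),a) <= M.
  move=> t x tt; have [M hM] := @bnd R _ _ S2 A gL cA gLc (t,x) tt.
  by exists M => a Aa; apply: le_trans (ler_norm _) (hM a Aa).
have gL_lam : forall t x a, tint T t -> A a -> gL ((t,x),a) <= lam t x.
  move=> t x a tt Aa; have [M hM] := gLb t x tt; exact: supA_ub hM Aa.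
have lam_ge0 : forall t x, tint T t -> 0 <= lam t x.
  move=> t x tt; case: A0 => a Aa; exact: le_trans (gL_ge0 _) (gL_lam t x a tt Aa).
have f_lam : forall t x a, tint T t -> A a -> N%:R * `|f t x a| <= lam t x.
  move=> t x a tt Aa; apply: le_trans (gL_lam t x a tt Aa); by rewrite /gL /= lerDl.
have l_lam : forall t x a, tint T t -> A a -> `|l t x a| <= lam t x.
  move=> t x a tt Aa; apply: le_trans (gL_lam t x a tt Aa); by rewrite /gL /= lerDr mulr_ge0.
have gHb : forall t x p a, tint T t -> A a ->
    `|gH (((t,x),p),a)| <= (`|p| + 1) * lam t x.
  move=> t x p a tt Aa; rewrite /gH /=.
  apply: le_trans (ler_normB _ _) _; rewrite mulrDl mul1r; apply: lerD; last exact: l_lam.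
  apply: le_trans (dotv_bound _ _) _.
  rewrite (mulrC N%:R) -mulrA; apply: ler_wpM2l => //; exact: f_lam.
have Hsup : forall t x p, tint T t -> H t x p = sup [set gH (((t,x),p),a) | a in A].
  by move=> t x p tt; exact: hH.
have Hcmp : forall t x p y q e, tint T t ->
    (forall a, A a -> `|gH (((t,x),p),a) - gH (((t,y),q),a)| <= e) ->
    `|H t x p - H t y q| <= e.
  move=> t x p y q e tt h; rewrite !Hsup //.
  apply: (@supA_dist R _ A (fun a => gH (((t,x),p),a)) (fun a => gH (((t,y),q),a)) e
    (Num.max ((`|p| + 1) * lam t x) ((`|q| + 1) * lam t y)) A0) => // b Ab.
    by rewrite le_max gHb.
  by rewrite le_max gHb ?orbT.
have Hub : forall t x p a, tint T t -> A a -> gH (((t,x),p),a) <= H t x p.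
  move=> t x p a tt Aa; rewrite Hsup //.
  exact: supA_ub (fun b Ab => le_trans (ler_norm _) (gHb t x p b tt Ab)) Aa.
have Hle : forall t x p M, tint T t -> (forall a, A a -> gH (((t,x),p),a) <= M) -> H t x p <= M.
  by move=> t x p M tt h; rewrite Hsup //; exact: supA_le A0 h.
have Hlip : forall t x p q c, tint T t -> (forall a, A a -> N%:R * `|f t x a| <= c) ->
    `|H t x p - H t x q| <= c * enorm (p - q).
  move=> t x p q c tt hc; apply: Hcmp => // a Aa; rewrite /gH /=.
  have -> : dotv p (f t x a) - l t x a - (dotv q (f t x a) - l t x a) =
      dotv (p - q) (f t x a) by rewrite dotvBl; ring.
  apply: le_trans (dotv_bound _ _) _.
  rewrite mulrAC; apply: ler_pM => //.
  - exact: hc.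
  - exact: mx_le_enorm.
have mtint : measurable (tint T).
  have -> : tint T = `[0, T]%classic by apply/seteqP; split => u /=; rewrite in_itv /=.
  exact: measurable_itv.
have integ_scale : forall (g : R -> R) (k : R), 0 <= k -> integ_nonneg T g ->
    integ_nonneg T (fun t => k * g t).
  move=> g k k0 [g0 gi]; split; first by move=> u uu; rewrite mulr_ge0 // g0.
  have -> : EFin \o (fun t => k * g t) = (fun t => k%:E * (EFin \o g) t)%E.
    by apply/funext => u /=; rewrite EFinM.
  exact: integrableZl.
have aeF : Filter (nbhs (almost_everywhere (@lebR R))).
  exact: (@ae_filter_ringOfSetsType _ _ R (@lebesgue_measure R)).
have H2c : H2 T H.
  move=> t x tt p q s /andP[s0 s1]; apply: Hle => // a Aa; rewrite /gH /= dotv_conv.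
  have h1 := Hub t x p a tt Aa; have h2 := Hub t x q a tt Aa; rewrite /gH /= in h1 h2.
  have s1' : 0 <= 1 - s by rewrite subr_ge0.
  have e1 := ler_wpM2l s0 h1; have e2 := ler_wpM2l s1' h2.
  have -> : s * dotv p (f t x a) + (1 - s) * dotv q (f t x a) - l t x a =
    s * (dotv p (f t x a) - l t x a) + (1 - s) * (dotv q (f t x a) - l t x a) by ring.
  exact: lerD.
have H3c : H3 T H.
  move=> r r0.
  pose K1 := [set t : R | 0 <= t <= T].
  pose K2 := [set x : 'rV[R]_N | `|x| <= r].
  have cK1 : compact K1.
    have -> : K1 = `[0, T]%classic by apply/seteqP; split => u /=; rewrite in_itv /=.
    exact: segment_compact.
  have cK2 : compact K2.
    apply: bounded_closed_compact.
      exists r; split; first by rewrite num_real.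
      by move=> M M1 v hv /=; exact: le_trans hv (ltW M1).
    have -> : K2 = (fun v => `|v|) @^-1` [set x : R | x <= r] by [].
    apply: preimage_closed; last exact: closed_le.
    by move=> v _; exact: norm_continuous.
  have sub : K1 `*` K2 `<=` S2 by move=> [u v] [/= uu _].
  have [M hM] := @cbound R _ (K1 `*` K2) (fun z => lam z.1 z.2) (compact_setX cK1 cK2) (continuous_subspaceW sub lamc).
  exists (Num.max M 0); split; first by rewrite le_max lexx orbT.
  move=> t x p q tt cx.
  apply: le_trans (Hlip t x p q (lam t x) tt (fun a Aa => f_lam t x a tt Aa)) _.
  apply: ler_wpM2r; first exact: enorm_ge0.
  have hx : K2 x by apply: le_trans (mx_le_enorm x) cx.
  apply: le_trans (ler_norm _) _; apply: le_trans (hM (t, x) (conj tt hx)) _.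
  by rewrite le_max lexx.
have H4c : H4 T H.
  case: R3 => C [Ci hC].
  exists (fun t => N%:R * C t); split; first exact: integ_scale.
  move: hC; apply: (@filterS _ _ aeF) => t ht tt x p q.
  apply: Hlip => // a Aa; rewrite /= -mulrA; apply: ler_wpM2l => //.
  apply: le_trans (mx_le_enorm _) _; apply: le_trans _ (ht tt x a Aa).
  by rewrite lerDl.
have N0 : (0 : R) <= N%:R by exact: ler0n.
have H5c : H5 T H.
  move=> r r0; have [K [Ki hK]] := R2 r r0.
  have K0 := proj1 Ki.
  exists (fun t => (N%:R + 1) * K t); split; first by apply: integ_scale => //; rewrite addr_ge0.
  move: hK; apply: (@filterS _ _ aeF) => t ht tt x y p cx cy.
  apply: Hcmp => // a Aa; rewrite /gH /=.
  have -> : dotv p (f t x a) - l t x a - (dotv p (f t y a) - l t y a) =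
      dotv p (f t x a - f t y a) - (l t x a - l t y a) by rewrite dotvBr; ring.
  apply: le_trans (ler_normB _ _) _.
  have h4 := ht tt x y a cx cy Aa.
  have Kt := K0 t tt.
  set P := enorm p; set F := enorm (f t x a - f t y a); set L := `|l t x a - l t y a|.
  set E := enorm (x - y).
  have P0 : 0 <= P by exact: enorm_ge0.
  have F0 : 0 <= F by exact: enorm_ge0.
  have L0 : 0 <= L by exact: normr_ge0.
  have e1 : `|dotv p (f t x a - f t y a)| <= N%:R * P * F.
    apply: le_trans (dotv_bound _ _) _; apply: ler_pM => //.
    - by apply: ler_wpM2l => //; exact: mx_le_enorm.
    - exact: mx_le_enorm.
  have e3 : (N%:R + 1) * (1 + P) * (F + L) <= (N%:R + 1) * (1 + P) * (K t * E).
    by apply: ler_wpM2l => //; rewrite mulr_ge0 // addr_ge0.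
  have e4 : N%:R * P * F + L <= (N%:R + 1) * (1 + P) * (F + L).
    have h5 : 0 <= (N%:R + 1) * F + N%:R * L + P * F + (N%:R + 1) * P * L.
      by rewrite !addr_ge0 // !mulr_ge0 // addr_ge0.
    have -> : (N%:R + 1) * (1 + P) * (F + L) = N%:R * P * F + L +
      ((N%:R + 1) * F + N%:R * L + P * F + (N%:R + 1) * P * L) by ring.
    by rewrite lerDl.
  apply: le_trans (lerD e1 (lexx L)) _; apply: le_trans e4 _.
  apply: le_trans e3 _; rewrite le_eqVlt; apply/orP; left; apply/eqP; ring.
have ubS : forall t x v, domHstar H t x v ->
    forall p, dotv v p - H t x p <= fine (Hstar H t x v).
  move=> t x v hv p; rewrite -lee_fin fineK //.
  by apply: ereal_sup_ubound; exists p.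
split; first exact: H1c.
split; first exact: H2c.
split; first exact: H3c.
split; first exact: H4c.
split; first exact: H5c.
exists lam; split; first exact: lamc.
split; first exact: lam_ge0.
split.
  move=> t x tt v hv; rewrite leNgt; apply/negP => hlt.
  set r := fine (Hstar H t x v).
  set e := enorm v; set L := lam t x.
  have L0 : 0 <= L := lam_ge0 t x tt.
  have eL : 0 < e - L by rewrite subr_gt0.
  have e0 : 0 < e by apply: le_lt_trans hlt.
  have Hsv : forall s, 0 <= s -> H t x (s *: v) <= s * e * L + L.
    move=> s s0; apply: Hle => // a Aa; rewrite /gH /= dotvZl.
    have d1 : N%:R * `|v| * `|f t x a| <= e * L.
      rewrite mulrAC mulrC; apply: ler_pM => //.
      - exact: mx_le_enorm.
      - exact: f_lam.
    have d2 : dotv v (f t x a) <= e * L.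
      exact: le_trans (ler_norm _) (le_trans (dotv_bound _ _) d1).
    have d3 : - l t x a <= L.
      by apply: le_trans (l_lam t x a tt Aa); rewrite -normrN ler_norm.
    have := ler_wpM2l s0 d2; rewrite mulrA => d4.
    exact: lerD d4 d3.
  pose s := (`|r| + L + 1) / (e * (e - L)).
  have s0 : 0 <= s.
    apply: divr_ge0; first by rewrite !addr_ge0.
    by rewrite mulr_ge0 // ltW.
  have hs : s * (e * (e - L)) = `|r| + L + 1.
    by rewrite /s divfK // mulf_neq0 // gt_eqF.
  have := ubS t x v hv (s *: v); rewrite dotvZr dotvv -/r => hu.
  have := Hsv s s0 => hH'.
  have : s * e ^+ 2 - (s * e * L + L) <= r by apply: le_trans hu; rewrite lerB.
  have -> : s * e ^+ 2 - (s * e * L + L) = s * (e * (e - L)) - L by ring.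
  rewrite hs => h.
  have := ler_norm r; lra.
split.
  move=> t x tt v hv.
  have hr : Hstar H t x v = (fine (Hstar H t x v))%:E by rewrite fineK.
  set r := fine (Hstar H t x v).
  set L := lam t x.
  have L0 : 0 <= L := lam_ge0 t x tt.
  rewrite hr abse_EFin lee_fin ler_norml; apply/andP; split.
    have := ubS t x v hv 0; rewrite dotv0r -/r => h0.
    have : H t x 0 <= L.
      apply: Hle => // a Aa; rewrite /gH /= dotv0l sub0r.
      by apply: le_trans (l_lam t x a tt Aa); rewrite -normrN ler_norm.
    lra.
  rewrite leNgt; apply/negP => hlt.
  have : (L%:E < Hstar H t x v)%E by rewrite hr lte_fin.
  case/ereal_sup_gt => _ [p _ <-]; rewrite lte_fin => hp.
  set D := dotv v p - H t x p.
  have DL : 0 < D - L by rewrite subr_gt0.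
  have Hsp : forall s, 1 <= s -> H t x (s *: p) <= s * H t x p + (s - 1) * L.
    move=> s s1; apply: Hle => // a Aa; rewrite /gH /= dotvZl.
    have h1 := Hub t x p a tt Aa; rewrite /gH /= in h1.
    have s0 : 0 <= s by apply: le_trans s1.
    have s1' : 0 <= s - 1 by rewrite subr_ge0.
    have h2 : l t x a <= L by apply: le_trans (l_lam t x a tt Aa); exact: ler_norm.
    have e1 := ler_wpM2l s0 h1; have e2 := ler_wpM2l s1' h2.
    have -> : s * dotv p (f t x a) - l t x a =
      s * (dotv p (f t x a) - l t x a) + (s - 1) * l t x a by ring.
    exact: lerD.
  pose s := 1 + `|r| / (D - L).
  have s1 : 1 <= s by rewrite /s lerDl divr_ge0 // ltW.
  have hs : s * (D - L) = (D - L) + `|r|.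
    by rewrite /s mulrDl mul1r divfK // gt_eqF.
  have := ubS t x v hv (s *: p); rewrite dotvZr -/r => hu.
  have := Hsp s s1 => hH'.
  have : s * dotv v p - (s * H t x p + (s - 1) * L) <= r by apply: le_trans hu; rewrite lerB.
  have -> : s * dotv v p - (s * H t x p + (s - 1) * L) = s * (D - L) + L by rewrite /D; ring.
  rewrite hs => h.
  have := ler_norm r; lra.
split.
  move=> r r0; have [K [Ki hK]] := R2 r r0.
  have K0 := proj1 Ki.
  exists (fun t => (N%:R + 1) * K t); split; first by apply: integ_scale => //; rewrite addr_ge0.
  move: hK; apply: (@filterS _ _ aeF) => t ht tt x y cx cy.
  apply: (@supA_dist R _ A (fun a => gL ((t, x), a)) (fun a => gL ((t, y), a)) _
    (Num.max (lam t x) (lam t y)) A0).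
  - by move=> b Ab; rewrite ger0_norm // le_max gL_lam.
  - by move=> b Ab; rewrite ger0_norm // le_max gL_lam ?orbT.
  move=> a Aa.
  have -> : gL ((t, x), a) - gL ((t, y), a) =
    N%:R * (`|f t x a| - `|f t y a|) + (`|l t x a| - `|l t y a|) by rewrite /gL /=; ring.
  apply: le_trans (ler_normD _ _) _; rewrite normrM (ger0_norm N0).
  have d1 := ler_dist_dist (f t x a) (f t y a).
  have d2 := ler_dist_dist (l t x a) (l t y a).
  have d3 := mx_le_enorm (f t x a - f t y a).
  have h4 := ht tt x y a cx cy Aa.
  have Kt := K0 t tt.
  set F := enorm (f t x a - f t y a) in d3 h4; set L := `|l t x a - l t y a| in d2 h4.
  set E := enorm (x - y) in h4.
  have F0 : 0 <= F by exact: enorm_ge0.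
  have L0 : 0 <= L by exact: normr_ge0.
  have e1 : N%:R * `| `|f t x a| - `|f t y a| | <= N%:R * F.
    by apply: ler_wpM2l => //; exact: le_trans d1 d3.
  have e2 : N%:R * F + L <= (N%:R + 1) * (F + L).
    have -> : (N%:R + 1) * (F + L) = N%:R * F + L + (F + N%:R * L) by ring.
    by rewrite lerDl addr_ge0 // mulr_ge0.
  have e3 : (N%:R + 1) * (F + L) <= (N%:R + 1) * (K t * E).
    by apply: ler_wpM2l => //; rewrite addr_ge0.
  apply: le_trans (lerD e1 d2) _; apply: le_trans e2 _; apply: le_trans e3 _.
  by rewrite mulrA.
case: R3 => C [Ci hC].
exists (fun t => (N%:R + 1) * C t); split; first by apply: integ_scale => //; rewrite addr_ge0.
move: hC; apply: (@filterS _ _ aeF) => t ht tt x.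
apply: (@supA_le R _ A (fun a => gL ((t, x), a)) _ A0) => a Aa; rewrite /gL /=.
have h := ht tt x a Aa.
have d3 := mx_le_enorm (f t x a).
set F := enorm (f t x a) in h d3.
have F0 : 0 <= F by exact: enorm_ge0.
have L0 : 0 <= `|l t x a| by exact: normr_ge0.
have e1 : N%:R * `|f t x a| <= N%:R * F by apply: ler_wpM2l.
have e2 : N%:R * F + `|l t x a| <= (N%:R + 1) * (F + `|l t x a|).
  have -> : (N%:R + 1) * (F + `|l t x a|) = N%:R * F + `|l t x a| + (F + N%:R * `|l t x a|) by ring.
  by rewrite lerDl addr_ge0 // mulr_ge0.
have e3 : (N%:R + 1) * (F + `|l t x a|) <= (N%:R + 1) * (C t * (1 + enorm x)).
  by apply: ler_wpM2l => //; rewrite addr_ge0.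
apply: le_trans (lerD e1 (lexx _)) _; apply: le_trans e2 _; apply: le_trans e3 _.
by rewrite mulrA.
Qed.
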